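(* Let $\gamma\in\mathbb N\setminus\{1\}$, $b_1<b_2<\dots<b_\gamma$ real numbers, and $a\in C(\mathbb R,\mathbb R)$ with $a(x)=(\max\{x,0\})^\gamma$ for all $x\in\mathbb R$. Then (i) $(\mathcal R_a(\mathbf I_\gamma))(x)=x^\gamma$ for all $x\in\mathbb R$; (ii) there exist unique $c_0,\dots,c_\gamma\in\mathbb R$ such that for all $k\in\{0,1,\dots,\gamma\}$, $\mathbb 1_{\{\gamma\}}(k)c_0+\sum_{i=1}^\gamma c_i(b_i)^k=\mathbb 1_{\{\gamma-1\}}(k)\gamma^{-1}$; (iii) with these constants $\Psi=\mathbf A_{1,c_0}\bullet\bigl(\bigoplus_{i=1}^\gamma(c_i\circledast(\mathbf I_\gamma\bullet\mathbf A_{1,b_i}))\bigr)\in\mathbf N$ is well defined; (iv) $\mathcal D(\Psi)=(1,2\gamma,1)$; (v) $\mathcal R_a(\Psi)\in C(\mathbb R,\mathbb R)$; and (vi) $(\mathcal R_a(\Psi))(x)=x$ for all $x\in\mathbb R$.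
   Context: Artificial neural networks (ANNs). Let $\mathbb N=\{1,2,\dots\}$ and $\mathbf N=\bigcup_{L\in\mathbb N}\bigcup_{l_0,\dots,l_L\in\mathbb N}\prod_{k=1}^L(\mathbb R^{l_k\times l_{k-1}}\times\mathbb R^{l_k})$. For $\Phi=((W_1,B_1),\dots,(W_L,B_L))$ in the $(l_0,\dots,l_L)$ component, $\mathcal L(\Phi)=L$, $\mathcal I(\Phi)=l_0$, $\mathcal O(\Phi)=l_L$, $\mathcal D(\Phi)=(l_0,\dots,l_L)$. For $a\in C(\mathbb R,\mathbb R)$ the realization is $(\mathcal R_a(\Phi))(x_0)=W_Lx_{L-1}+B_L$ with $x_k=\mathfrak M_{a,l_k}(W_kx_{k-1}+B_k)$, $k=1,\dots,L-1$, $\mathfrak M_{a,m}$ applying $a$ componentwise. $\operatorname I_n$ is the identity matrix; $\mathbf A_{W,B}=((W,B))$ (for reals $w,b$, $\mathbf A_{w,b}$ has $1\times1$ weight $w$ and bias $b$). Composition: for $\Phi_1=((W_1,B_1),\dots,(W_L,B_L))$, $\Phi_2=((\mathscr W_1,\mathscr B_1),\dots,(\mathscr W_{\mathfrak L},\mathscr B_{\mathfrak L}))$ with $\mathcal I(\Phi_1)=\mathcal O(\Phi_2)$, $\Phi_1\bullet\Phi_2=((\mathscr W_1,\mathscr B_1),\dots,(\mathscr W_{\mathfrak L-1},\mathscr B_{\mathfrak L-1}),(W_1\mathscr W_{\mathfrak L},W_1\mathscr B_{\mathfrak L}+B_1),(W_2,B_2),\dots,(W_L,B_L))$. $\lambda\circledast\Phi=\mathbf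 A_{\lambda\operatorname I_{\mathcal O(\Phi)},0}\bullet\Phi$. $\mathbf P_n(\Phi_1,\dots,\Phi_n)$ (equal lengths) has $k$-th layer $(\operatorname{diag}(W_{1,k},\dots,W_{n,k}),(B_{1,k},\dots,B_{n,k}))$. $\mathfrak S_{m,n}=\mathbf A_{(\operatorname I_m\cdots\operatorname I_m),0}$, $\mathfrak T_{m,n}=\mathbf A_{(\operatorname I_m\cdots\operatorname I_m)^\top,0}$ ($n$ blocks). For $\Phi_u,\dots,\Phi_v$ with equal $\mathcal L,\mathcal I,\mathcal O$: $\bigoplus_{k=u}^v\Phi_k=\mathfrak S_{\mathcal O(\Phi_u),v-u+1}\bullet([\mathbf P_{v-u+1}(\Phi_u,\dots,\Phi_v)]\bullet\mathfrak T_{\mathcal I(\Phi_u),v-u+1})$. For $\gamma\in\mathbb N_0$, $\mathbf I_\gamma=\bigl(\bigl(\begin{pmatrix}1\\-1\end{pmatrix},\begin{pmatrix}0\\0\end{pmatrix}\bigr),\bigl(\begin{pmatrix}1&(-1)^\gamma\end{pmatrix},0\bigr)\bigr)\in(\mathbb R^{2\times1}\times\mathbb R^2)\times(\mathbb R^{1\times2}\times\mathbb R^1)$. *)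

(* Defs.v *)
From HB Require Import structures.
From mathcomp Require Import all_boot all_order all_algebra.
From mathcomp Require Import all_classical all_reals all_analysis.
Set Implicit Arguments. Unset Strict Implicit. Unset Printing Implicit Defensive.
Import Order.TTheory GRing.Theory Num.Theory numFieldNormedType.Exports.

(* A matrix W in R^{m x n} is represented by its dimensions (m,n) together with
   an entry function nat -> nat -> R, of which only the entries (i,j) with
   i < m, j < n are ever used; likewise vectors are nat -> R. *)

Section ANN.
Variable R : realType.
Local Open Scope ring_scope.

Record layer := Layer { lrows : nat; lcols : nat;
                        lW : nat -> nat -> R; lB : nat -> R }.

Definition ann := seq layer.

Definition dflt_layer : layer := Layer 0 0 (fun _ _ => 0) (fun _ => 0).

Definition isANN (Phi : ann) : bool :=
  match Phi with
  | [::] => false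
  | l :: Phi' => (0 < lcols l)%N
                 && path (fun l1 l2 => lcols l2 == lrows l1) l Phi'
                 && all (fun l => (0 < lrows l)%N) Phi
  end.

Definition lenA (Phi : ann) : nat := size Phi.
Definition inA (Phi : ann) : nat := lcols (head dflt_layer Phi).
Definition outA (Phi : ann) : nat := lrows (last dflt_layer Phi).
Definition dimsA (Phi : ann) : seq nat := inA Phi :: map lrows Phi.

Definition affine (l : layer) (x : nat -> R) : nat -> R :=
  fun i => \sum_(j < lcols l) lW l i j * x j + lB l i.

(* realization R_a(Phi), acting on vectors (only the first I(Phi) input
   entries are used, only the first O(Phi) output entries are meaningful) *)
Fixpoint realize (a : R -> R) (Phi : ann) (x : nat -> R) : nat -> R :=
  match Phi with
  | [::] => x
  | [:: l] => affine l x
  | l :: Phi' => realize a Phi' (fun i => a (affine l x i))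
  end.

Definition realize1 (a : R -> R) (Phi : ann) (x : R) : R :=
  realize a Phi (fun _ => x) 0%N.

Definition affA (m n : nat) (W : nat -> nat -> R) (B : nat -> R) : ann :=
  [:: Layer m n W B].

Definition A1 (w b : R) : ann := affA 1 1 (fun _ _ => w) (fun _ => b).

Definition compose_raw (Phi1 Phi2 : ann) : ann :=
  let l2 := last dflt_layer Phi2 in
  let l1 := head dflt_layer Phi1 in
  take (size Phi2).-1 Phi2 ++
  Layer (lrows l1) (lcols l2)
        (fun i j => \sum_(t < lrows l2) lW l1 i t * lW l2 t j)
        (fun i => \sum_(t < lrows l2) lW l1 i t * lB l2 t + lB l1 i)
  :: behead Phi1.

Definition compose (Phi1 Phi2 : ann) : option ann :=
  if isANN Phi1 && isANN Phi2 && (inA Phi1 == outA Phi2)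
  then Some (compose_raw Phi1 Phi2) else None.

Definition scal (lam : R) (Phi : ann) : option ann :=
  compose (affA (outA Phi) (outA Phi) (fun i j => lam * (i == j)%:R)
                (fun _ => 0)) Phi.

Definition blockdiag2 (l1 l2 : layer) : layer :=
  let r1 := lrows l1 in let c1 := lcols l1 in
  Layer (r1 + lrows l2) (c1 + lcols l2)
        (fun i j => if (i < r1)%N then (if (j < c1)%N then lW l1 i j else 0)
                    else if (c1 <= j)%N then lW l2 (i - r1) (j - c1) else 0)
        (fun i => if (i < r1)%N then lB l1 i else lB l2 (i - r1)).

Definition diagL (ls : seq layer) : layer := foldr blockdiag2 dflt_layer ls.

Definition parallel (Phis : seq ann) : option ann :=
  let L := size (head [::] Phis) in
  if ~~ nilp Phis && all isANN Phis && all (fun Phi => size Phi == L) Phis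
  then Some (mkseq (fun k => diagL (map (fun Phi => nth dflt_layer Phi k) Phis)) L)
  else None.

(* \mathfrak S_{m,n} = A_{(I_m ... I_m), 0}  (m x mn) *)
Definition Ssum (m n : nat) : ann :=
  affA m (m * n) (fun i j => (i == (j %% m)%N)%:R) (fun _ => 0).
(* \mathfrak T_{m,n} = A_{(I_m ... I_m)^T, 0}  (mn x m) *)
Definition Tsum (m n : nat) : ann :=
  affA (m * n) m (fun i j => ((i %% m)%N == j)%:R) (fun _ => 0).

Definition bigsum (Phis : seq ann) : option ann :=
  match Phis with
  | [::] => None
  | Phi0 :: _ =>
    if all (fun Phi => (size Phi == size Phi0) && (inA Phi == inA Phi0)
                       && (outA Phi == outA Phi0)) Phis
    then obind (fun PT => compose (Ssum (outA Phi0) (size Phis)) PT)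
           (obind (fun P => compose P (Tsum (inA Phi0) (size Phis)))
                  (parallel Phis))
    else None
  end.

Definition Igam (gamma : nat) : ann :=
  [:: Layer 2 1 (fun i _ => if i == 0%N then 1 else -1) (fun _ => 0);
      Layer 1 2 (fun _ j => if j == 0%N then 1 else (-1) ^+ gamma) (fun _ => 0)].

Definition oseq (T : Type) (s : seq (option T)) : option (seq T) :=
  foldr (fun o acc => obind (fun x => omap (cons x) acc) o) (Some [::]) s.

(* Psi = A_{1,c_0} \bullet ( \bigoplus_{i=1}^gamma
           (c_i \circledast (I_gamma \bullet A_{1,b_i})) ) ;
   None iff some operation is applied outside its domain *)
Definition Psi (gamma : nat) (b c : nat -> R) : option ann :=
  obind (fun S => compose (A1 1 (c 0%N)) S)
    (obind bigsum
       (oseq [seq obind (scal (c i)) (compose (Igam gamma) (A1 1 (b i)))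
             | i <- iota 1 gamma])).

Definition coeffEq (gamma : nat) (b c : nat -> R) : Prop :=
  forall k : nat, (k <= gamma)%N ->
    (k == gamma)%:R * c 0%N + \sum_(1 <= i < gamma.+1) c i * b i ^+ k
    = (k == gamma.-1)%:R * (gamma%:R)^-1.

End ANN.

(* Main.v *)
Require Import Defs.
From HB Require Import structures.
From mathcomp Require Import all_boot all_order all_algebra.
From mathcomp Require Import all_classical all_reals all_analysis.
From mathcomp Require Import ring lra.
Import Order.TTheory GRing.Theory Num.Theory numFieldNormedType.Exports.
Local Open Scope ring_scope.

Section S.
Variable R : realType.
Notation layer := (layer R).
Notation dfl := (dflt_layer R).

Definition Nn (n : nat) (b c : nat -> R) (i : nat) : ann R :=
  compose_raw (affA 1 1 (fun i0 j => c i * (i0 == j)%:R) (fun _ => 0))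
              (compose_raw (Igam R n) (A1 1 (b i))).

Definition D1 n b c := diagL [seq nth dfl (Nn n b c i) 0 | i <- iota 1 n].
Definition D2 n b c := diagL [seq nth dfl (Nn n b c i) 1 | i <- iota 1 n].

Definition Psi0 n b c := compose_raw (A1 1 (c 0%N))
   (compose_raw (Ssum R 1 n) (compose_raw [:: D1 n b c; D2 n b c] (Tsum R 1 n))).

Lemma oseq_map (T U : Type) (f : T -> option U) (g : T -> U) s :
  (forall x, f x = Some (g x)) -> oseq (map f s) = Some (map g s).
Proof. by move=> H; elim: s => //= x s IH; rewrite H /= IH. Qed.

Lemma all_map_true (T U : Type) (f : T -> U) (P : pred U) s :
  (forall x, P (f x)) -> all P (map f s).
Proof. by move=> H; elim: s => //= x s ->; rewrite H. Qed.

Lemma compose_ok (P1 P2 : ann R) : isANN P1 -> isANN P2 -> inA P1 = outA P2 ->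
  compose P1 P2 = Some (compose_raw P1 P2).
Proof. by move=> h1 h2 h3; rewrite /compose h1 h2 h3 eqxx. Qed.

Lemma elem_eq n b c i :
  obind (scal (c i)) (compose (Igam R n) (A1 1 (b i))) = Some (Nn n b c i).
Proof. by []. Qed.

Lemma diag_rows (f : nat -> layer) k s : (forall i, lrows (f i) = k) ->
  lrows (diagL (map f s)) = (k * size s)%N.
Proof. move=> H; elim: s => [|x s IH] /=; first by rewrite muln0.
by rewrite IH H mulnS. Qed.

Lemma diag_cols (f : nat -> layer) k s : (forall i, lcols (f i) = k) ->
  lcols (diagL (map f s)) = (k * size s)%N.
Proof. move=> H; elim: s => [|x s IH] /=; first by rewrite muln0.
by rewrite IH H mulnS. Qed.

Lemma D1_rows n b c : lrows (D1 n b c) = (2 * n)%N.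
Proof. by rewrite /D1 (@diag_rows _ 2) ?size_iota. Qed.
Lemma D1_cols n b c : lcols (D1 n b c) = (1 * n)%N.
Proof. by rewrite /D1 (@diag_cols _ 1) ?size_iota. Qed.
Lemma D2_rows n b c : lrows (D2 n b c) = (1 * n)%N.
Proof. by rewrite /D2 (@diag_rows _ 1) ?size_iota. Qed.
Lemma D2_cols n b c : lcols (D2 n b c) = (2 * n)%N.
Proof. by rewrite /D2 (@diag_cols _ 2) ?size_iota. Qed.



Lemma powmax_id (g : nat) (x : R) : (0 < g)%N ->
  Num.max x 0 ^+ g + (-1) ^+ g * Num.max (- x) 0 ^+ g = x ^+ g.
Proof.
move=> g0; case: (boolP (0 <= x)) => hx.
- have -> : Num.max x 0 = x by apply/max_idPl.
  have -> : Num.max (-x) 0 = 0 by apply/max_idPr; rewrite oppr_le0.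
  by rewrite expr0n gtn_eqF // mulr0 addr0.
- have -> : Num.max x 0 = 0 by apply/max_idPr; rewrite ltW // ltNge.
  have -> : Num.max (-x) 0 = -x by apply/max_idPl; rewrite oppr_ge0 ltW // ltNge.
  by rewrite expr0n gtn_eqF // add0r -exprMn mulN1r opprK.
Qed.

Lemma Igam_real (a : R -> R) g x :
  realize1 a (Igam R g) x = a x + (-1) ^+ g * a (- x).
Proof.
rewrite /realize1 /= /affine /= !big_ord_recr !big_ord0 /=.
by rewrite !add0r !addr0 !mul1r mulN1r.
Qed.

Lemma Psi_eq n b c : (0 < n)%N -> Psi n b c = Some (Psi0 n b c).
Proof.
move=> n0; rewrite /Psi.
rewrite (@oseq_map _ _ _ (Nn n b c)); last by move=> x; exact: elem_eq.
case: n n0 => // m _ /=.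
rewrite all_map_true //.
rewrite /parallel /=.
rewrite all_map_true //.
rewrite all_map_true //.
rewrite size_map size_iota /=.
rewrite (_ : mkseq _ 2 = [:: D1 m.+1 b c; D2 m.+1 b c]); last by rewrite /D1 /D2 /mkseq; cbn -[Nn]; rewrite -!map_comp.
have r1 := D1_rows m.+1 b c; have c1 := D1_cols m.+1 b c.
have r2 := D2_rows m.+1 b c; have c2 := D2_cols m.+1 b c.
rewrite /Psi0; set d1 := D1 _ b c in r1 c1 *; set d2 := D2 _ b c in r2 c2 *.
clearbody d1 d2.
rewrite compose_ok /=; last first.
- exact: c1.
- by [].
- by rewrite c1 r1 c2 r2 !eqxx !muln_gt0.
rewrite compose_ok /=; last first.
- by rewrite /inA /outA /= r2.
- by rewrite r1 c2 r2 !eqxx !muln_gt0.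
- by [].
by rewrite compose_ok //= r1 c2 !eqxx !muln_gt0.
Qed. 
Definition rsum (l : layer) j := \sum_(t < lcols l) lW l j t.
Definition csum (l : layer) j := \sum_(t < lrows l) lW l t j.

Lemma real_shape (d1 d2 : layer) n c0 a x : lcols d1 = n ->
  realize1 a (compose_raw (A1 1 c0) (compose_raw (Ssum R 1 n)
     (compose_raw [:: d1; d2] (Tsum R 1 n)))) x =
  \sum_(j < lcols d2) csum d2 j * a (rsum d1 j * x + lB d1 j)
  + (\sum_(t < lrows d2) lB d2 t + c0).
Proof.
move=> hc; rewrite /realize1 /= /affine /=.
congr (_ + _).
- apply: eq_bigr => j _; rewrite !big_ord1 mul1r /csum /rsum hc mul1n.
  congr (_ * a (_ + _)).
  + by apply: eq_bigr => t _; rewrite modn1 mul1r.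
  + by congr (_ * x); apply: eq_bigr => t _; rewrite modn1 mulr1.
  + by rewrite big1 ?add0r // => t _; rewrite mulr0.
- rewrite big_ord1 mul1r addr0; congr (_ + _).
  by apply: eq_bigr => t _; rewrite modn1 mul1r.
Qed.

Lemma rsum_bd l1 l2 j : rsum (blockdiag2 l1 l2) j =
  if (j < lrows l1)%N then rsum l1 j else rsum l2 (j - lrows l1).
Proof.
rewrite /rsum /= big_split_ord /=; case: ifP => hj.
- rewrite [X in _ + X]big1 ?addr0; last by move=> t _; rewrite ltnNge leq_addr.
  by apply: eq_bigr => t _; rewrite ltn_ord.
- rewrite big1 ?add0r; last by move=> t _; rewrite leqNgt ltn_ord.
  by apply: eq_bigr => t _; rewrite leq_addr addKn.
Qed.

Lemma csum_bd l1 l2 j : csum (blockdiag2 l1 l2) j =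
  if (j < lcols l1)%N then csum l1 j else csum l2 (j - lcols l1).
Proof.
rewrite /csum /= big_split_ord /=; case: ifP => hj.
- rewrite [X in _ + X]big1 ?addr0; last first.
    by move=> t _; rewrite ltnNge leq_addr /= leqNgt hj.
  by apply: eq_bigr => t _; rewrite ltn_ord.
- rewrite big1 ?add0r; last by move=> t _; rewrite ltn_ord.
  by apply: eq_bigr => t _; rewrite ltnNge leq_addr /= leqNgt hj addKn.
Qed.

Lemma block_sum (f1 f2 : nat -> layer) (G : R -> R -> R -> R) s :
  (forall i, lcols (f2 i) = lrows (f1 i)) ->
  \sum_(j < lrows (diagL (map f1 s)))
     G (csum (diagL (map f2 s)) j) (rsum (diagL (map f1 s)) j) (lB (diagL (map f1 s)) j)
  = \sum_(i <- s) \sum_(j < lrows (f1 i)) G (csum (f2 i) j) (rsum (f1 i) j) (lB (f1 i) j).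
Proof.
move=> h; elim: s => [|i s IH]; first by rewrite big_nil big_ord0.
rewrite big_cons -IH /= big_split_ord /=; congr (_ + _).
- by apply: eq_bigr => j _; rewrite rsum_bd csum_bd h ltn_ord.
- apply: eq_bigr => j _; rewrite rsum_bd csum_bd h ltnNge leq_addr /= addKn.
  by [].
Qed.

Lemma diag_lB0 (f : nat -> layer) s : (forall i t, lB (f i) t = 0) ->
  forall t, lB (diagL (map f s)) t = 0.
Proof. move=> h; elim: s => [|i s IH] t //=; by case: ifP. Qed.

Lemma block_eq n b c a x i :
  \sum_(j < lrows (nth dfl (Nn n b c i) 0))
     csum (nth dfl (Nn n b c i) 1) j *
     a (rsum (nth dfl (Nn n b c i) 0) j * x + lB (nth dfl (Nn n b c i) 0) j)
  = c i * (a (x + b i) + (-1) ^+ n * a (- (x + b i))).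
Proof.
rewrite /= /csum /rsum /= !big_ord_recr !big_ord0 /= !add0r !addr0 !mulr1 !mul1r.
by rewrite !mulN1r opprD mulrDr mulrA.
Qed.

Lemma real_Psi0 n b c a x : (0 < n)%N -> (forall y, a y = Num.max y 0 ^+ n) ->
  realize1 a (Psi0 n b c) x = \sum_(i <- iota 1 n) c i * (x + b i) ^+ n + c 0%N.
Proof.
move=> n0 ha; rewrite /Psi0 real_shape; last by rewrite D1_cols mul1n.
rewrite D2_cols -(D1_rows n b c) [X in _ + (X + _)]big1 ?add0r; last first.
  by move=> t _; rewrite /D2 diag_lB0 // => j t'; rewrite /= big_ord1 mulr0 addr0.
rewrite /D1 /D2 (@block_sum _ _ (fun w r l => w * a (r * x + l))) //.
congr (_ + _); apply: eq_bigr => i _.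
by rewrite block_eq !ha powmax_id.
Qed.


Lemma final_alg m (b c : nat -> R) x : coeffEq m.+1 b c ->
  \sum_(i <- iota 1 m.+1) c i * (x + b i) ^+ m.+1 + c 0%N = x.
Proof.
move=> H.
have E : index_iota 1 m.+2 = iota 1 m.+1 by rewrite /index_iota subSS subn0.
have hS : forall k : 'I_m.+2, \sum_(i <- iota 1 m.+1) c i * b i ^+ k =
   (k == m :> nat)%:R / (m.+1)%:R - (k == m.+1 :> nat)%:R * c 0%N.
  move=> k; have := H k (leq_ord k); rewrite /= E => <-.
  by rewrite addrAC subrr add0r.
have -> : \sum_(i <- iota 1 m.+1) c i * (x + b i) ^+ m.+1 =
   \sum_(k < m.+2) (x ^+ (m.+1 - k) * 'C(m.+1, k)%:R) *
        \sum_(i <- iota 1 m.+1) c i * b i ^+ k.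
  under eq_bigr => i _ do rewrite exprDn mulr_sumr.
  rewrite exchange_big /=; apply: eq_bigr => k _; rewrite mulr_sumr.
  by apply: eq_bigr => i _; rewrite -mulr_natr; ring.
under eq_bigr => k _ do rewrite hS.
rewrite big_ord_recr /= big_ord_recr /= big1; last first.
  move=> k _; rewrite !eqn_leq (leqNgt m) ltn_ord /= andbF.
  have hk : (k < m.+1)%N by rewrite ltnS ltnW.
  rewrite (leqNgt m.+1) hk andbF /=. by rewrite !mul0r subr0 mulr0.
have e1 : (m == m.+1) = false by elim: m {H E hS}.
have e2 : (m.+1 == m) = false by elim: m {H E hS e1}.
rewrite e1 e2 (eqxx m) (eqxx m.+1).
rewrite subnn subSnn binSn binn expr0 expr1 /=.
have hm : (m.+1)%:R != 0 :> R by rewrite pnatr_eq0.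
by field; rewrite addrC natr1.
Qed.

Lemma Psi0_ok n b c : (0 < n)%N ->
  isANN (Psi0 n b c) /\ dimsA (Psi0 n b c) = [:: 1; 2 * n; 1]%N.
Proof.
move=> n0; have r1 := D1_rows n b c; have c1 := D1_cols n b c.
have r2 := D2_rows n b c; have c2 := D2_cols n b c.
rewrite /Psi0; set d1 := D1 _ b c in r1 c1 *; set d2 := D2 _ b c in r2 c2 *.
clearbody d1 d2.
rewrite /isANN /dimsA /inA /= r1 c2 !eqxx muln_gt0 n0.
by [].
Qed.


Lemma sumshift n (F : nat -> R) :
  \sum_(1 <= i < n.+1) F i = \sum_(i < n) F i.+1.
Proof. by rewrite big_add1 /= big_mkord. Qed.

Section Coef.
Variables (m : nat) (b : nat -> R).
Hypothesis hb : forall i j : nat, (1 <= i)%N -> (i < j)%N -> (j <= m.+1)%N -> b i < b j.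

Definition Vm : 'M[R]_m.+1 := \matrix_(k < m.+1, i < m.+1) b i.+1 ^+ k.
Definition rhs : 'cV[R]_m.+1 := \col_(k < m.+1) ((k == m :> nat)%:R / (m.+1)%:R).
Definition sol := invmx Vm *m rhs.
Definition cf (j : nat) : R :=
  if j == 0%N then - \sum_(i < m.+1) sol i 0 * b i.+1 ^+ m.+1
  else sol (inord j.-1) 0.

Lemma Vm_unit : Vm \in unitmx.
Proof.
have -> : Vm = Vandermonde m.+1 (\row_i b i.+1) by apply/matrixP => i j; rewrite !mxE.
rewrite unitmxE unitfE det_Vandermonde; apply/prodf_neq0 => i _.
apply/prodf_neq0 => j ij; rewrite !mxE subr_eq0; apply/eqP => E.
have := hb i.+1 j.+1 (ltn0Sn i) (ij : (i.+1 < j.+1)%N) (ltn_ord j).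
by rewrite E ltxx.
Qed.

Lemma coeffEq_iff (c : nat -> R) : coeffEq m.+1 b c <->
  ((forall k : 'I_m.+1, \sum_(i < m.+1) c i.+1 * b i.+1 ^+ k = (k == m :> nat)%:R / (m.+1)%:R)
   /\ c 0%N + \sum_(i < m.+1) c i.+1 * b i.+1 ^+ m.+1 = 0).
Proof.
rewrite /coeffEq; split.
- move=> H; split.
  + move=> k; have := H k (ltnW (ltn_ord k)); rewrite sumshift /= => <-.
    by rewrite (ltn_eqF (ltn_ord k)) mulr0n mul0r add0r.
  + have := H m.+1 (leqnn _); rewrite sumshift /= eqxx mul1r => ->.
    by rewrite (_ : (m.+1 == m) = false) ?mulr0n ?mul0r //; elim: m {H}.
- move=> [H1 H2] k; rewrite leq_eqVlt => /orP [/eqP -> | hk].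
  + rewrite sumshift eqxx mul1r H2 /=.
    by rewrite (_ : (m.+1 == m) = false) ?mulr0n ?mul0r //; elim: m {H1 H2}.
  + rewrite sumshift /= (ltn_eqF hk) mulr0n mul0r add0r.
    by have := H1 (Ordinal hk).
Qed.

Lemma solP {c : nat -> R} : coeffEq m.+1 b c ->
  \col_(i < m.+1) c i.+1 = sol.
Proof.
move=> /coeffEq_iff [H1 _]; rewrite /sol.
have -> : rhs = Vm *m \col_(i < m.+1) c i.+1.
  apply/matrixP => k z; rewrite !mxE (ord1 z) -H1.
  by apply: eq_bigr => i _; rewrite !mxE mulrC.
by rewrite mulKmx // Vm_unit.
Qed.

Lemma cf_ok : coeffEq m.+1 b cf.
Proof.
apply/coeffEq_iff; split.
- move=> k; have := congr1 (fun M : 'M[R]_(m.+1,1) => M k 0) (mulKVmx Vm_unit rhs).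
  rewrite !mxE => <-; apply: eq_bigr => i _.
  by rewrite /cf /= inord_val !mxE mulrC.
  rewrite /cf /=; under [X in _ + X]eq_bigr => i _ do rewrite inord_val.
  by rewrite addNr.
Qed.

Lemma cf_uniq (c : nat -> R) : coeffEq m.+1 b c -> forall i, (i <= m.+1)%N -> c i = cf i.
Proof.
move=> H i hi; have S := solP H.
have Hi : forall j : 'I_m.+1, c j.+1 = sol j 0.
  by move=> j; rewrite -S mxE.
case: i hi => [|i] hi.
- move/coeffEq_iff: H => [_ H2]; rewrite /cf /=.
  apply/eqP; rewrite -subr_eq0 opprK; apply/eqP; rewrite -[RHS]H2; congr (_ + _).
  by apply: eq_bigr => j _; rewrite Hi.
- by rewrite /cf /= (Hi (Ordinal hi)) /=; congr (sol _ 0); apply/val_inj; rewrite /= inordK.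
Qed.
End Coef.
End S.

Theorem mainTheorem10 (R : realType) (gamma : nat) (b : nat -> R) (a : R -> R) :
  (2 <= gamma)%N ->
  (forall i j : nat, (1 <= i)%N -> (i < j)%N -> (j <= gamma)%N -> b i < b j) ->
  continuous a ->
  (forall x : R, a x = (Num.max x 0) ^+ gamma) ->
  (forall x : R, realize1 a (Igam R gamma) x = x ^+ gamma) /\
  exists c : nat -> R,
    coeffEq gamma b c /\
    (forall c' : nat -> R, coeffEq gamma b c' ->
       forall i : nat, (i <= gamma)%N -> c' i = c i) /\
    exists Psi0 : ann R,
      Psi gamma b c = Some Psi0 /\
      isANN Psi0 /\
      dimsA Psi0 = [:: 1; 2 * gamma; 1]%N /\
      continuous (realize1 a Psi0) /\
      (forall x : R, realize1 a Psi0 x = x).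
Proof.
case: gamma => [//|m] hg hb _ ha; split.
  by move=> x; rewrite Igam_real !ha powmax_id.
exists (cf R m b); split; first exact: (@cf_ok R m b hb).
split; first by move=> c' Hc' i hi; exact: (@cf_uniq R m b hb c' Hc' i hi).
have hr : forall x, realize1 a (Psi0 R m.+1 b (cf R m b)) x = x.
  by move=> x; rewrite real_Psi0 // (@final_alg R m b (cf R m b) x (@cf_ok R m b hb)).
have [h1 h2] := @Psi0_ok R m.+1 b (cf R m b) (ltn0Sn m).
exists (Psi0 R m.+1 b (cf R m b)); split; first exact: Psi_eq.
do 2 (split => //); split => //.
have -> : realize1 a (Psi0 R m.+1 b (cf R m b)) = (fun x => x) by apply: funext.
by move=> x; exact: cvg_id.
Qed.
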